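(* Let $\mu\in V_n$. Then (i) $\operatorname{tr}(\mathrm M_\mu D)=0$ for every $D\in\mathrm{Der}(\mu)$; (ii) $\operatorname{tr}(\mathrm M_\mu[A,A^*])\ge 0$ for every $A\in\mathrm{Der}(\mu)$, with equality if and only if $A^*\in\mathrm{Der}(\mu)$.
   Context: $V_n$ is the space of bilinear maps $\mu:\mathbb C^n\times\mathbb C^n\to\mathbb C^n$; $\mathbb C^n$ has its standard Hermitian inner product and $A^*$ is the adjoint. $\mathrm{Der}(\mu)=\{D\in\mathfrak{gl}(n): D\mu(X,Y)=\mu(DX,Y)+\mu(X,DY)\ \forall X,Y\}$. For $X\in\mathbb C^n$, $L^\mu_X Y=\mu(X,Y)$, $R^\mu_X Y=\mu(Y,X)$, and for an orthonormal basis $\{X_i\}$ of $\mathbb C^n$, $\mathrm M_\mu=2\sum_i L^\mu_{X_i}(L^\mu_{X_i})^*-2\sum_i (L^\mu_{X_i})^*L^\mu_{X_i}-2\sum_i (R^\mu_{X_i})^*R^\mu_{X_i}$. *)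

(* Defs.v *)
From HB Require Import structures.
From mathcomp Require Import all_boot all_order all_algebra.
From mathcomp Require Import complex.
From mathcomp Require Import reals.
Set Implicit Arguments. Unset Strict Implicit. Unset Printing Implicit Defensive.
Import Order.TTheory GRing.Theory Num.Theory.
Local Open Scope ring_scope.

(* Vectors of C^n are column vectors 'cV[C]_n, with C = R[i] for R : realType
   (the complex numbers).  Linear maps of C^n are n x n matrices acting on the left. *)

Section BilinearAlgebras.
Variable C : numClosedFieldType.
Variable n : nat.

Definition bilinear_map (mu : 'cV[C]_n -> 'cV[C]_n -> 'cV[C]_n) : Prop :=
  (forall (a : C) (X X' Y : 'cV[C]_n), mu (a *: X + X') Y = a *: mu X Y + mu X' Y) /\
  (forall (a : C) (X Y Y' : 'cV[C]_n), mu X (a *: Y + Y') = a *: mu X Y + mu X Y').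

Definition e_ (i : 'I_n) : 'cV[C]_n := delta_mx i 0.

Definition adjmx (A : 'M[C]_n) : 'M[C]_n := (map_mx Num.conj A)^T.

(* matrices of L^mu_X : Y |-> mu(X,Y)  and  R^mu_X : Y |-> mu(Y,X) *)
Definition Lmx (mu : 'cV[C]_n -> 'cV[C]_n -> 'cV[C]_n) (X : 'cV[C]_n) : 'M[C]_n :=
  \matrix_(i, j) (mu X (e_ j)) i 0.
Definition Rmx (mu : 'cV[C]_n -> 'cV[C]_n -> 'cV[C]_n) (X : 'cV[C]_n) : 'M[C]_n :=
  \matrix_(i, j) (mu (e_ j) X) i 0.

Definition is_derivation (mu : 'cV[C]_n -> 'cV[C]_n -> 'cV[C]_n) (D : 'M[C]_n) : Prop :=
  forall X Y : 'cV[C]_n, D *m mu X Y = mu (D *m X) Y + mu X (D *m Y).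

Definition Mmu (mu : 'cV[C]_n -> 'cV[C]_n -> 'cV[C]_n) : 'M[C]_n :=
  2%:R *: (\sum_(i < n) Lmx mu (e_ i) *m adjmx (Lmx mu (e_ i)))
  - 2%:R *: (\sum_(i < n) adjmx (Lmx mu (e_ i)) *m Lmx mu (e_ i))
  - 2%:R *: (\sum_(i < n) adjmx (Rmx mu (e_ i)) *m Rmx mu (e_ i)).

End BilinearAlgebras.

(* Main.v *)
Require Import Defs.
From HB Require Import structures.
From mathcomp Require Import all_boot all_order all_algebra.
From mathcomp Require Import ring.
Import Order.TTheory GRing.Theory Num.Theory.
Local Open Scope ring_scope.

Notation ee i := (e_ _ i).
Notation fam C n := ('I_n -> 'M[C]_n).

Lemma adjmx_entry {C : numClosedFieldType} {n : nat} (A : 'M[C]_n) (i : 'I_n) (j : 'I_n) : adjmx A i j = (A j i)^*.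
Proof. by rewrite !mxE. Qed.

Lemma adjmxK {C : numClosedFieldType} {n : nat} (A : 'M[C]_n) : adjmx (adjmx A) = A.
Proof. by apply/matrixP=> i j; rewrite !adjmx_entry conjCK. Qed.

Lemma adjmx_mul {C : numClosedFieldType} {n : nat} (A : 'M[C]_n) (B : 'M[C]_n) : adjmx (A *m B) = adjmx B *m adjmx A.
Proof.
apply/matrixP=> i j; rewrite adjmx_entry !mxE rmorph_sum; apply: eq_bigr => k _.
by rewrite !adjmx_entry rmorphM mulrC.
Qed.

Lemma adjmxB {C : numClosedFieldType} {n : nat} (A : 'M[C]_n) (B : 'M[C]_n) : adjmx (A - B) = adjmx A - adjmx B.
Proof. by apply/matrixP=> i j; rewrite !(mxE, adjmx_entry) rmorphB. Qed.

Lemma adjmx_sumZ {C : numClosedFieldType} {n : nat}  (a : 'I_n -> C) (T : fam C n) :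
  adjmx (\sum_m a m *: T m) = \sum_m (a m)^* *: adjmx (T m).
Proof.
apply/matrixP=> i j; rewrite adjmx_entry !summxE rmorph_sum; apply: eq_bigr => k _.
by rewrite !mxE rmorphM.
Qed.

Definition ip {C : numClosedFieldType} {n : nat}  (S T : fam C n) : C := \sum_i \tr (S i *m adjmx (T i)).

Lemma ip_ext {C : numClosedFieldType} {n : nat} (S : fam C n) (S' : fam C n) (T : fam C n) (T' : fam C n) : (forall i, S i = S' i) -> (forall i, T i = T' i) ->
  ip S T = ip S' T'.
Proof. by move=> h1 h2; apply: eq_bigr => i _; rewrite h1 h2. Qed.

Lemma ipB1 {C : numClosedFieldType} {n : nat} (S1 : fam C n) (S2 : fam C n) (T : fam C n) : ip (fun i => S1 i - S2 i) T = ip S1 T - ip S2 T.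
Proof. by rewrite /ip -sumrB; apply: eq_bigr => i _; rewrite mulmxBl linearB. Qed.

Lemma ipB2 {C : numClosedFieldType} {n : nat} (S : fam C n) (T1 : fam C n) (T2 : fam C n) : ip S (fun i => T1 i - T2 i) = ip S T1 - ip S T2.
Proof. by rewrite /ip -sumrB; apply: eq_bigr => i _; rewrite adjmxB mulmxBr linearB. Qed.

Lemma ip_l {C : numClosedFieldType} {n : nat} (D : 'M[C]_n) (S : fam C n) (T : fam C n) : ip (fun i => D *m S i) T = ip S (fun i => adjmx D *m T i).
Proof.
apply: eq_bigr => i _; rewrite adjmx_mul adjmxK -mulmxA mxtrace_mulC.
by rewrite -mulmxA.
Qed.

Lemma ip_r {C : numClosedFieldType} {n : nat} (D : 'M[C]_n) (S : fam C n) (T : fam C n) : ip (fun i => S i *m D) T = ip S (fun i => T i *m adjmx D).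
Proof. by apply: eq_bigr => i _; rewrite adjmx_mul adjmxK mulmxA. Qed.

Definition xo {C : numClosedFieldType} {n : nat} (D : 'M[C]_n) (T : fam C n) : fam C n := fun i => \sum_m D m i *: T m.

Lemma ip_x {C : numClosedFieldType} {n : nat} (D : 'M[C]_n) (S : fam C n) (T : fam C n) : ip (xo D S) T = ip S (xo (adjmx D) T).
Proof.
rewrite /ip /xo.
under eq_bigr do rewrite mulmx_suml raddf_sum.
under [RHS]eq_bigr do rewrite adjmx_sumZ mulmx_sumr raddf_sum.
rewrite exchange_big; apply: eq_bigr => m _; apply: eq_bigr => i _.
by rewrite -scalemxAl -scalemxAr adjmx_entry conjCK.
Qed.

Definition piop {C : numClosedFieldType} {n : nat} (D : 'M[C]_n) (T : fam C n) : fam C n := fun i => D *m T i - xo D T i - T i *m D.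

Lemma ip_piop {C : numClosedFieldType} {n : nat} (D : 'M[C]_n) (S : fam C n) (T : fam C n) : ip (piop D S) T = ip S (piop (adjmx D) T).
Proof.
rewrite /piop.
rewrite (ipB1 (fun i => D *m S i - xo D S i)) ipB1 ip_l ip_r ip_x.
by rewrite (ipB2 S (fun i => adjmx D *m T i - xo (adjmx D) T i)) ipB2.
Qed.

Lemma xoxo {C : numClosedFieldType} {n : nat} (A : 'M[C]_n) (B : 'M[C]_n) (T : fam C n) (i : 'I_n) : xo A (xo B T) i = xo (B *m A) T i.
Proof.
rewrite /xo; under eq_bigr do rewrite scaler_sumr.
rewrite exchange_big; apply: eq_bigr => p _; rewrite mxE scaler_suml.
by apply: eq_bigr => m _; rewrite scalerA mulrC.
Qed.

Lemma mul_xo {C : numClosedFieldType} {n : nat} (A : 'M[C]_n) (B : 'M[C]_n) (T : fam C n) (i : 'I_n) : A *m xo B T i = xo B (fun m => A *m T m) i.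
Proof. by rewrite /xo mulmx_sumr; apply: eq_bigr => m _; rewrite scalemxAr. Qed.

Lemma xo_mul {C : numClosedFieldType} {n : nat} (A : 'M[C]_n) (B : 'M[C]_n) (T : fam C n) (i : 'I_n) : xo B T i *m A = xo B (fun m => T m *m A) i.
Proof. by rewrite /xo mulmx_suml; apply: eq_bigr => m _; rewrite scalemxAl. Qed.

Lemma xoB {C : numClosedFieldType} {n : nat} (D : 'M[C]_n) (T1 : fam C n) (T2 : fam C n) (i : 'I_n) : xo D (fun m => T1 m - T2 m) i = xo D T1 i - xo D T2 i.
Proof. by rewrite /xo -sumrB; apply: eq_bigr => m _; rewrite scalerBr. Qed.

Lemma xoBD {C : numClosedFieldType} {n : nat} (A : 'M[C]_n) (B : 'M[C]_n) (T : fam C n) (i : 'I_n) : xo (A - B) T i = xo A T i - xo B T i.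
Proof. by rewrite /xo -sumrB; apply: eq_bigr => m _; rewrite !mxE scalerBl. Qed.

Lemma piop_comm {C : numClosedFieldType} {n : nat} (A : 'M[C]_n) (B : 'M[C]_n) (T : fam C n) (i : 'I_n) :
  piop (A *m B - B *m A) T i = piop A (piop B T) i - piop B (piop A T) i.
Proof.
rewrite /piop.
rewrite (xoB A (fun m => B *m T m - xo B T m)) xoB.
rewrite (xoB B (fun m => A *m T m - xo A T m)) xoB.
rewrite xoBD !xoxo !mulmxBr !mulmxBl !mul_xo !xo_mul !mulmxA.
move: (A *m B *m T i) (B *m A *m T i) (xo (A *m B) T i) (xo (B *m A) T i)
  (T i *m A *m B) (T i *m B *m A) (xo B (fun m => A *m T m) i) (A *m T i *m B)
  (xo A (fun m => B *m T m) i) (xo A (fun m => T m *m B) i) (B *m T i *m A)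
  (xo B (fun m => T m *m A) i) => ? ? ? ? ? ? ? ? ? ? ? ?.
by apply/matrixP=> k l; rewrite !mxE; ring.
Qed.

Lemma tr_adj {C : numClosedFieldType} {n : nat} (X Y : 'M[C]_n) :
  \tr (X *m adjmx Y) = \sum_k \sum_j X k j * (Y k j)^*.
Proof.
rewrite /mxtrace; apply: eq_bigr => k _; rewrite mxE; apply: eq_bigr => j _.
by rewrite adjmx_entry.
Qed.

Lemma ip_ge0 {C : numClosedFieldType} {n : nat} (T : fam C n) : 0 <= ip T T.
Proof.
rewrite /ip; apply: sumr_ge0 => i _; rewrite tr_adj; apply: sumr_ge0 => k _.
by apply: sumr_ge0 => j _; apply: mul_conjC_ge0.
Qed.

Lemma ip_eq0 {C : numClosedFieldType} {n : nat} (T : fam C n) :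
  ip T T = 0 -> forall i k j, T i k j = 0.
Proof.
move=> h i k j.
have pos : forall i', 0 <= \tr (T i' *m adjmx (T i')).
  move=> i'; rewrite tr_adj; apply: sumr_ge0 => k' _.
  by apply: sumr_ge0 => j' _; apply: mul_conjC_ge0.
have h1 : \tr (T i *m adjmx (T i)) = 0 by apply: (psumr_eq0P _ h) => // i' _.
move: h1; rewrite tr_adj => h1.
have h2 : \sum_j (T i k j * (T i k j)^*) = 0.
  apply: (psumr_eq0P _ h1) => // k' _; apply: sumr_ge0 => j' _; exact: mul_conjC_ge0.
have h3 : T i k j * (T i k j)^* = 0.
  apply: (psumr_eq0P _ h2) => // j' _; exact: mul_conjC_ge0.
by apply/eqP; rewrite -mul_conjC_eq0 h3.
Qed.

Lemma ip0 {C : numClosedFieldType} {n : nat} (S T : fam C n) :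
  (forall i, S i = 0) -> ip S T = 0.
Proof. by move=> h; rewrite /ip big1 // => i _; rewrite h mul0mx linear0. Qed.

Lemma lin_sum {C : numClosedFieldType} {n : nat} (f : 'cV[C]_n -> 'cV[C]_n)
  (Hf : forall a X X', f (a *: X + X') = a *: f X + f X')
  (a : 'I_n -> C) (F : 'I_n -> 'cV[C]_n) :
  f (\sum_m a m *: F m) = \sum_m a m *: f (F m).
Proof.
have f0 : f 0 = 0.
  have := Hf 1 0 0; rewrite !scale1r addr0 => h.
  by apply: (@addrI _ (f 0)); rewrite addr0 -h.
apply: (big_rec2 (fun y1 y2 => f y1 = y2)) => // m y1 y2 _ <-.
by rewrite Hf.
Qed.

Lemma colv {C : numClosedFieldType} {n : nat} (v : 'cV[C]_n) :
  v = \sum_m v m 0 *: ee m.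
Proof.
apply/matrixP=> k l; rewrite (ord1 l) summxE (bigD1 k) //= big1 ?addr0.
  by rewrite !mxE eqxx mulr1.
by move=> m hm; rewrite !mxE eq_sym (negbTE hm) mulr0.
Qed.

Lemma Dmul_e {C : numClosedFieldType} {n : nat} (D : 'M[C]_n) j :
  D *m ee j = \sum_m D m j *: ee m.
Proof.
rewrite {1}(colv (D *m ee j)); apply: eq_bigr => m _; congr (_ *: _).
rewrite mxE (bigD1 j) //= big1 ?addr0; first by rewrite !mxE eqxx mulr1.
by move=> p hp; rewrite !mxE (negbTE hp) mulr0.
Qed.

Lemma piop_entry {C : numClosedFieldType} {n : nat} (mu : 'cV[C]_n -> 'cV[C]_n -> 'cV[C]_n)
  (Hb : bilinear_map mu) (D : 'M[C]_n) i k j :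
  piop D (fun i => Lmx mu (ee i)) i k j =
  (D *m mu (ee i) (ee j) - mu (D *m ee i) (ee j) - mu (ee i) (D *m ee j)) k 0.
Proof.
case: Hb => H1 H2.
have -> : mu (D *m ee i) (ee j) = \sum_m D m i *: mu (ee m) (ee j).
  by rewrite Dmul_e; apply: (lin_sum (fun X => mu X (ee j))) => a X X'; apply: H1.
have -> : mu (ee i) (D *m ee j) = \sum_m D m j *: mu (ee i) (ee m).
  by rewrite Dmul_e; apply: (lin_sum (mu (ee i))) => a X X'; apply: H2.
rewrite /piop /xo !mxE !summxE.
congr (_ - _ - _).
- by apply: eq_bigr => m _; rewrite !mxE.
- by apply: eq_bigr => m _; rewrite !mxE.
- by apply: eq_bigr => m _; rewrite !mxE mulrC.
Qed.

Lemma basis_der {C : numClosedFieldType} {n : nat} (mu : 'cV[C]_n -> 'cV[C]_n -> 'cV[C]_n)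
  (Hb : bilinear_map mu) (D : 'M[C]_n) :
  (forall i j, D *m mu (ee i) (ee j) = mu (D *m ee i) (ee j) + mu (ee i) (D *m ee j)) ->
  is_derivation mu D.
Proof.
case: Hb => H1 H2 H X Y.
pose f := fun X Y => D *m mu X Y - mu (D *m X) Y - mu X (D *m Y).
have fl : forall Y a X X', f (a *: X + X') Y = a *: f X Y + f X' Y.
  move=> Y' a X1 X2; rewrite /f !H1 !mulmxDr -!scalemxAr !H1.
  move: (D *m mu X1 Y') (D *m mu X2 Y') (mu (D *m X1) Y') (mu (D *m X2) Y')
    (mu X1 (D *m Y')) (mu X2 (D *m Y')) => ? ? ? ? ? ?.
  by apply/matrixP=> k l; rewrite !mxE; ring.
have fr : forall X a Y Y', f X (a *: Y + Y') = a *: f X Y + f X Y'.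
  move=> X' a Y1 Y2; rewrite /f !H2 !mulmxDr -!scalemxAr !H2.
  move: (D *m mu X' Y1) (D *m mu X' Y2) (mu (D *m X') Y1) (mu (D *m X') Y2)
    (mu X' (D *m Y1)) (mu X' (D *m Y2)) => ? ? ? ? ? ?.
  by apply/matrixP=> k l; rewrite !mxE; ring.
have : f X Y = 0.
  rewrite (colv X) (lin_sum (fun X => f X Y) (fun a X X' => fl Y a X X')) big1 // => i _.
  rewrite (colv Y) (lin_sum (f (ee i)) (fr (ee i))) big1 ?scaler0 // => j _.
  rewrite /f H; move: (mu (D *m ee i) (ee j)) (mu (ee i) (D *m ee j)) => p q.
  by rewrite (addrC p q) addrK subrr scaler0.
by rewrite /f -addrA -opprD => /eqP; rewrite subr_eq0 => /eqP.
Qed.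

Lemma der_piop0 {C : numClosedFieldType} {n : nat} (mu : 'cV[C]_n -> 'cV[C]_n -> 'cV[C]_n)
  (Hb : bilinear_map mu) (D : 'M[C]_n) :
  is_derivation mu D -> forall i, piop D (fun i => Lmx mu (ee i)) i = 0.
Proof.
move=> H i; apply/matrixP=> k j; rewrite piop_entry // H.
move: (mu (D *m ee i) (ee j)) (mu (ee i) (D *m ee j)) => p q.
rewrite (addrC p q) addrK subrr.
by rewrite !mxE.
Qed.

Lemma piop0_der {C : numClosedFieldType} {n : nat} (mu : 'cV[C]_n -> 'cV[C]_n -> 'cV[C]_n)
  (Hb : bilinear_map mu) (D : 'M[C]_n) :
  (forall i k j, piop D (fun i => Lmx mu (ee i)) i k j = 0) -> is_derivation mu D.
Proof.
move=> H; apply: basis_der => // i j.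
apply/eqP; rewrite -subr_eq0 opprD addrA; apply/eqP/matrixP => k l.
by rewrite (ord1 l) -piop_entry // H mxE.
Qed.

Lemma Rterm {C : numClosedFieldType} {n : nat} (mu : 'cV[C]_n -> 'cV[C]_n -> 'cV[C]_n)
  (D : 'M[C]_n) :
  \sum_j \tr (adjmx (Rmx mu (ee j)) *m Rmx mu (ee j) *m D) =
  ip (xo D (fun i => Lmx mu (ee i))) (fun i => Lmx mu (ee i)).
Proof.
transitivity (\sum_j \sum_k \sum_i
   ((\sum_m (mu (ee m) (ee j)) k 0 * D m i) * ((mu (ee i) (ee j)) k 0)^*)).
  apply: eq_bigr => j _; rewrite -mulmxA mxtrace_mulC tr_adj.
  apply: eq_bigr=> k _; apply: eq_bigr => i _; rewrite !mxE; congr (_ * _).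
  by apply: eq_bigr => m _; rewrite !mxE.
transitivity (\sum_i \sum_k \sum_j
   ((\sum_m (mu (ee m) (ee j)) k 0 * D m i) * ((mu (ee i) (ee j)) k 0)^*)).
  rewrite exchange_big /=; under eq_bigr do rewrite exchange_big /=.
  by rewrite exchange_big.
rewrite /ip; apply: eq_bigr => i _; rewrite tr_adj; apply: eq_bigr => k _.
apply: eq_bigr => j _; rewrite /xo summxE !mxE; congr (_ * _).
by apply: eq_bigr => m _; rewrite !mxE mulrC.
Qed.

Lemma trM {C : numClosedFieldType} {n : nat} (mu : 'cV[C]_n -> 'cV[C]_n -> 'cV[C]_n)
  (D : 'M[C]_n) :
  \tr (Mmu mu *m D) = 2 * ip (piop D (fun i => Lmx mu (ee i))) (fun i => Lmx mu (ee i)).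
Proof.
rewrite /Mmu !mulmxBl -!scalemxAl !mulmx_suml !linearB /= !linearZ /= !raddf_sum.
rewrite /piop (ipB1 (fun i => D *m Lmx mu (ee i) - xo D _ i)) ipB1 -Rterm.
have -> : \sum_i \tr (Lmx mu (ee i) *m adjmx (Lmx mu (ee i)) *m D) =
   ip (fun i => D *m Lmx mu (ee i)) (fun i => Lmx mu (ee i)).
  by apply: eq_bigr => i _; rewrite mxtrace_mulC mulmxA.
have -> : \sum_i \tr (adjmx (Lmx mu (ee i)) *m Lmx mu (ee i) *m D) =
   ip (fun i => Lmx mu (ee i) *m D) (fun i => Lmx mu (ee i)).
  by apply: eq_bigr => i _; rewrite -mulmxA mxtrace_mulC.
by rewrite !mulrBr [LHS]addrAC.
Qed.

From mathcomp Require Import complex.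
From mathcomp Require Import reals.
Local Open Scope complex_scope.

Theorem corollary3p2 (R : realType) (n : nat)
  (mu : 'cV[R[i]]_n -> 'cV[R[i]]_n -> 'cV[R[i]]_n) :
  bilinear_map mu ->
  (forall D : 'M[R[i]]_n, is_derivation mu D -> \tr (Mmu mu *m D) = 0) /\
  (forall A : 'M[R[i]]_n, is_derivation mu A ->
     0 <= \tr (Mmu mu *m (A *m adjmx A - adjmx A *m A)) /\
     (\tr (Mmu mu *m (A *m adjmx A - adjmx A *m A)) = 0 <-> is_derivation mu (adjmx A))).
Proof.
move=> Hb; split.
  by move=> D HD; rewrite trM ip0 ?mulr0 //; apply: der_piop0.
move=> A HA.
pose L := fun i => Lmx mu (ee i).
have key : \tr (Mmu mu *m (A *m adjmx A - adjmx A *m A)) =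
    2 * ip (piop (adjmx A) L) (piop (adjmx A) L).
  rewrite trM; congr (_ * _).
  rewrite (@ip_ext _ _ _ (fun i => piop A (piop (adjmx A) L) i - piop (adjmx A) (piop A L) i)
     _ L); [| by move=> i; apply: piop_comm | by []].
  rewrite ipB1 (ip_piop A) (ip_piop (adjmx A) (piop A L)) adjmxK.
  by rewrite (@ip0 _ _ (piop A L)) ?subr0 //; apply: der_piop0.
rewrite key; split.
  by apply: mulr_ge0; [rewrite ler0n | apply: ip_ge0].
split.
  move=> /eqP; rewrite mulf_eq0 pnatr_eq0 /= => /eqP h.
  by apply: piop0_der => // i k j; apply: ip_eq0 h i k j.
by move=> H; rewrite ip0 ?mulr0 //; apply: der_piop0.
Qed.
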